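(* Let $p\geq 3$ and $0\leq a,d\leq p-1$ be integers, let $m\geq 3$, and let $A$ be an $m$-rowed simple $(0,1,2)$-matrix with $F(a,p,p,d)\not\prec A$. Fix any choice of associated vectors for the pairs of rows of $A$ (as described in the context), and let $B$ and $T$ be the corresponding matrix of unmarked columns and directed graph. If $|B|>2^m+m2^{m-1}-2^{m-3}$, then $T$ is transitive, i.e. whenever $i\to j$ and $j\to k$ are edges of $T$ for distinct $i,j,k$, then $i\to k$ is also an edge of $T$.
   Context: A simple matrix has no repeated columns; $|A|$ is the number of columns. $F\prec A$ means some submatrix of $A$ is a row/column permutation of $F$. $F(a,b,c,d)$ is the 2-rowed $(0,1)$-matrix with $a$ columns $\binom00$, $b$ columns $\binom10$, $c$ columns $\binom01$, $d$ columns $\binom11$. Associated vectors: to each pair $1\leq i<j\leq m$ one associates a vector $\binom{x}{y}\in\{\binom00,\binom01,\binom10,\binom11\}$ such that: if $\binom xy\in\{\binom01,\binom10\}$, there are at most $p-1$ columns $v$ of $A$ with $(v_i,v_j)=(x,y)$; if $\binom xy=\binom00$, at most $a-1$ such columns; if $\binom xy=\binom11$, at most $d-1$ such columns (such a vector exists since $F(a,p,p,d)\not\prec A$; if several are possible one is chosen arbitrarily). A column $v$ has a mark at $(i,j)$ if $(v_i,v_j)$ equals the vector associated with $(i,j)$. $B$ is the submatrix of columns of $A$ with no mark. $T$ is the directed graph on $[m]$ which, for each $i<j$, has the edge $i\to j$ if $\binom01$ is associated with $(i,j)$, the edge $j\to i$ if $\binom10$ is associated with $(i,j)$, and no edge between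 $i,j$ otherwise. *)

(* Defs.v *)
From mathcomp Require Import all_boot all_order all_algebra.
Set Implicit Arguments. Unset Strict Implicit. Unset Printing Implicit Defensive.

Definition is012 (m n : nat) (A : 'M[nat]_(m, n)) : Prop :=
  forall i j, A i j < 3.

Definition simple_mx (m n : nat) (A : 'M[nat]_(m, n)) : Prop :=
  injective (fun j : 'I_n => col j A).

(* F(a,b,c,d): 2 rows; a columns (0,0)^T, b columns (1,0)^T,
   c columns (0,1)^T, d columns (1,1)^T (row 0 is the top row). *)
Definition Fmx (a b c d : nat) : 'M[nat]_(2, a + b + c + d) :=
  \matrix_(i < 2, j < a + b + c + d)
    (if val j < a then 0
     else if val j < a + b then (if val i == 0 then 1 else 0)
     else if val j < a + b + c then (if val i == 0 then 0 else 1)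
     else 1).

(* F ≺ A: some submatrix of A is a row/column permutation of F, i.e. there
   are injective choices of rows and columns of A realising F. *)
Definition configuration (k l m n : nat) (F : 'M[nat]_(k, l)) (A : 'M[nat]_(m, n)) : Prop :=
  exists (r : 'I_k -> 'I_m) (c : 'I_l -> 'I_n),
    injective r /\ injective c /\ forall i j, A (r i) (c j) = F i j.

Definition paircount (m n : nat) (A : 'M[nat]_(m, n)) (i j : 'I_m) (x y : bool) : nat :=
  #|[set v : 'I_n | (A i v == nat_of_bool x) && (A j v == nat_of_bool y)]|.

(* assoc i j (for i < j) is the associated vector (x,y), true = 1. *)
Definition valid_assoc (a p d m n : nat) (A : 'M[nat]_(m, n))
    (assoc : 'I_m -> 'I_m -> bool * bool) : Prop :=
  forall i j : 'I_m, i < j ->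
    let xy := assoc i j in
    paircount A i j xy.1 xy.2 <
      (if xy.1 != xy.2 then p else if xy.1 then d else a).

Definition has_mark (m n : nat) (A : 'M[nat]_(m, n))
    (assoc : 'I_m -> 'I_m -> bool * bool) (v : 'I_n) (i j : 'I_m) : bool :=
  (A i v == nat_of_bool (assoc i j).1) && (A j v == nat_of_bool (assoc i j).2).

Definition Bcols (m n : nat) (A : 'M[nat]_(m, n))
    (assoc : 'I_m -> 'I_m -> bool * bool) : {set 'I_n} :=
  [set v : 'I_n | [forall i : 'I_m, forall j : 'I_m, (i < j) ==> ~~ has_mark A assoc v i j]].

Definition Tedge (m : nat) (assoc : 'I_m -> 'I_m -> bool * bool) (u w : 'I_m) : bool :=
  ((u < w) && (assoc u w == (false, true))) || ((w < u) && (assoc w u == (true, false))).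

(* Main.v *)
Require Import Defs.
From mathcomp Require Import all_boot all_order all_algebra zify.
Set Implicit Arguments. Unset Strict Implicit. Unset Printing Implicit Defensive.

Definition pat (x y : 'I_3) (c : bool * bool) : bool :=
  (val x == nat_of_bool c.1) && (val y == nat_of_bool c.2).

Definition goodf m (F : 'I_m -> 'I_m -> bool * bool) (R : {set 'I_m})
  (f : {ffun 'I_m -> 'I_3}) : bool :=
  [forall u, forall w, ((u \in R) && (w \in R) && (u != w)) ==> ~~ pat (f u) (f w) (F u w)]
  && [forall u, (u \notin R) ==> (f u == ord0)].

Definition Zs m (F : 'I_m -> 'I_m -> bool * bool) (R : {set 'I_m}) := [set f | @goodf m F R f].

Lemma goodP m (F : 'I_m -> 'I_m -> bool * bool) (R : {set 'I_m}) (f : {ffun 'I_m -> 'I_3}) : reflect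
  ((forall u w, u \in R -> w \in R -> u != w -> ~~ pat (f u) (f w) (F u w)) /\
   (forall u, u \notin R -> f u = ord0)) (@goodf m F R f).
Proof.
apply: (iffP andP) => [[/forallP H1 /forallP H2]|[H1 H2]]; split.
- move=> u w uR wR uw.
  by move: (H1 u) => /forallP /(_ w) /implyP; apply; rewrite uR wR uw.
- by move=> u uR; apply/eqP; move: (H2 u) => /implyP; apply.
- apply/forallP => u; apply/forallP => w; apply/implyP => /andP[/andP[uR wR] uw].
  exact: H1.
- apply/forallP => u; apply/implyP => uR; apply/eqP; exact: H2.
Qed.

Definition setf m (f : {ffun 'I_m -> 'I_3}) r x : {ffun 'I_m -> 'I_3} :=
  [ffun u => if u == r then x else f u].
Definition rest m (f : {ffun 'I_m -> 'I_3}) r := setf f r ord0.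

Lemma rest_good m (F : 'I_m -> 'I_m -> bool * bool) (R : {set 'I_m}) r f : @goodf m F R f -> goodf F (R :\ r) (rest f r).
Proof.
move/goodP=> [H1 H2]; apply/goodP; split.
- move=> u w; rewrite !in_setD1 => /andP[ur uR] /andP[wr wR] uw.
  rewrite /rest /setf !ffunE (negbTE ur) (negbTE wr); exact: H1.
- move=> u; rewrite in_setD1 negb_and negbK /rest /setf ffunE.
  by case: eqP => // _ /= uR; exact: H2.
Qed.

Definition z1 : 'I_3 := @Ordinal 3 1 isT.
Definition z2 : 'I_3 := @Ordinal 3 2 isT.

Lemma step m (F : 'I_m -> 'I_m -> bool * bool) (R : {set 'I_m}) r : r \in R ->
  #|@Zs m F R| <= 2 * #|Zs F (R :\ r)| + 2 ^ #|R :\ r|.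
Proof.
move=> rR.
set R' := R :\ r.
set D := [set u in Zs F R' | (setf u r ord0 \in Zs F R) && (setf u r z1 \in Zs F R)].
have cardD : #|D| <= 2 ^ #|R'|.
  pose supp (u : {ffun 'I_m -> 'I_3}) := [set w in R' | val (u w) != 2].
  have inj : {in D &, injective supp}.
    move=> u1 u2; rewrite !inE => /andP[Z1 /andP[A0 A1]] /andP[Z2 /andP[B0 B1]] Hs.
    move: Z1 Z2 => /goodP[_ S1] /goodP[_ S2].
    apply/ffunP => x.
    case xR': (x \in R'); last by rewrite S1 ?S2 ?xR'.
    have xR : x \in R by move: xR'; rewrite in_setD1 => /andP[].
    have xr : x != r by move: xR'; rewrite in_setD1 => /andP[].
    case h1: (val (u1 x) == 2).
      have : x \notin supp u1 by rewrite inE xR' h1.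
      rewrite Hs inE xR' /= negbK => h2.
      by apply: val_inj; rewrite (eqP h1); apply/eqP; rewrite eq_sym.
    have : x \in supp u1 by rewrite inE xR' h1.
    rewrite Hs inE xR' /= => h2.
    have G : forall u b, goodf F R (setf u r b) -> ~~ pat (u x) b (F x r).
      move=> u b /goodP[G _].
      have := G x r xR rR xr; by rewrite /setf !ffunE (negbTE xr) eqxx.
    have g1 := G _ _ A0; have g2 := G _ _ A1; have g3 := G _ _ B0; have g4 := G _ _ B1.
    apply: val_inj; move: g1 g2 g3 g4 h1 h2; rewrite /pat /=.
    have := ltn_ord (u1 x); have := ltn_ord (u2 x).
    case: (F x r) => [[] []] /=; lia.
  rewrite -(card_in_imset inj) -card_powerset; apply: subset_leq_card.
  apply/subsetP => _ /imsetP[u _ ->]; rewrite powersetE; apply/subsetP => w.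
  by rewrite inE => /andP[].
have fib : forall u, u \in Zs F R' ->
    #|[set f | (f \in Zs F R) && (rest f r == u)]| <= 2 + (u \in D).
  move=> u uZ.
  set X := [set x | setf u r x \in Zs F R].
  apply: (@leq_trans #|[set setf u r x | x in X]|).
    apply: subset_leq_card; apply/subsetP => f; rewrite inE => /andP[fZ /eqP fu].
    have -> : f = setf u r (f r).
      apply/ffunP => x; rewrite /setf ffunE; case: eqP => [->|/eqP xr] //.
      by rewrite -fu /rest /setf ffunE (negbTE xr).
    apply: imset_f; rewrite inE.
    suff -> : setf u r (f r) = f by [].
    apply/ffunP => x; rewrite /setf ffunE; case: eqP => [->|/eqP xr] //.
    by rewrite -fu /rest /setf ffunE (negbTE xr).
  apply: (leq_trans (leq_imset_card _ _)).
  rewrite /D inE uZ /=.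
  rewrite !inE; case X0: (goodf F R (setf u r ord0)); case X1: (goodf F R (setf u r z1)) => /=.
  - by apply: (leq_trans (max_card _)); rewrite card_ord.
  - apply: (@leq_trans #|[set ord0; z2]|); last by rewrite cards2.
    apply/subset_leq_card/subsetP => x; rewrite !inE => Hx.
    have : x != z1 by apply/eqP => e; rewrite -e Hx in X1.
    by case: x Hx => [[|[|[|]]] ?] //= _ _; rewrite ?eqxx ?orbT.
  - apply: (@leq_trans #|[set z1; z2]|); last by rewrite cards2.
    apply/subset_leq_card/subsetP => x; rewrite !inE => Hx.
    have : x != ord0 by apply/eqP => e; rewrite -e Hx in X0.
    by case: x Hx => [[|[|[|]]] ?] //= _ _; rewrite ?eqxx ?orbT.
  - apply: (@leq_trans #|[set z2]|); last by rewrite cards1.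
    apply/subset_leq_card/subsetP => x; rewrite !inE => Hx.
    have : x != ord0 by apply/eqP => e; rewrite -e Hx in X0.
    have : x != z1 by apply/eqP => e; rewrite -e Hx in X1.
    by case: x Hx => [[|[|[|]]] ?] //= _ _; rewrite ?eqxx ?orbT.
rewrite -sum1_card (partition_big (fun f => rest f r) (mem (Zs F R'))) /=; last first.
  by move=> f; rewrite !inE; exact: rest_good.
apply: (@leq_trans (\sum_(u in Zs F R') (2 + (u \in D)))).
  apply: leq_sum => u uZ; rewrite sum1dep_card; exact: fib.
rewrite big_split /= sum_nat_const mulnC leq_add2l.
apply: (@leq_trans (\sum_(u in D) 1)); last by rewrite sum1_card.
rewrite (big_setID D) /=.
have -> : \sum_(i in Zs F R' :\: D) (i \in D : nat) = 0.
  by apply: big1 => u; rewrite inE => /andP[/negbTE -> _].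
rewrite addn0; apply: (@leq_trans (\sum_(i in D) (i \in D : nat))).
  by apply: sub_le_big => [//|u y|u]; [exact: leq_addr | rewrite inE => /andP[]].
by apply: leq_sum => u ->.
Qed.


Definition z0 : 'I_3 := @Ordinal 3 0 isT.
Definition Wc (c : bool * bool) := [set t : 'I_3 * 'I_3 * 'I_3 | [&& ~~ pat t.1.1 t.1.2 (false,true),
   ~~ pat t.1.2 t.2 (false,true) & ~~ pat t.1.1 t.2 c]].
Lemma Wc_card c : c != (false, true) -> #|Wc c| <= 19.
Proof.
have H264 : Wc (false,false) \subset [set t in ([:: (z0,z0,z2); (z0,z2,z1); (z0,z2,z2); (z1,z0,z0); (z1,z0,z2); (z1,z1,z0); (z1,z1,z1); (z1,z1,z2); (z1,z2,z0); (z1,z2,z1); (z1,z2,z2); (z2,z0,z0); (z2,z0,z2); (z2,z1,z0); (z2,z1,z1); (z2,z1,z2); (z2,z2,z0); (z2,z2,z1); (z2,z2,z2)] : seq ('I_3 * 'I_3 * 'I_3))].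
  apply/subsetP => -[[[[|[|[|x]]] px] [[|[|[|y]]] py]] [[|[|[|z]]] pz]] //; by rewrite !inE.
have H667 : Wc (true,false) \subset [set t in ([:: (z0,z0,z0); (z0,z0,z2); (z0,z2,z0); (z0,z2,z1); (z0,z2,z2); (z1,z0,z2); (z1,z1,z1); (z1,z1,z2); (z1,z2,z1); (z1,z2,z2); (z2,z0,z0); (z2,z0,z2); (z2,z1,z0); (z2,z1,z1); (z2,z1,z2); (z2,z2,z0); (z2,z2,z1); (z2,z2,z2)] : seq ('I_3 * 'I_3 * 'I_3))].
  apply/subsetP => -[[[[|[|[|x]]] px] [[|[|[|y]]] py]] [[|[|[|z]]] pz]] //; by rewrite !inE.
have H1057 : Wc (true,true) \subset [set t in ([:: (z0,z0,z0); (z0,z0,z2); (z0,z2,z0); (z0,z2,z1); (z0,z2,z2); (z1,z0,z0); (z1,z0,z2); (z1,z1,z0); (z1,z1,z2); (z1,z2,z0); (z1,z2,z2); (z2,z0,z0); (z2,z0,z2); (z2,z1,z0); (z2,z1,z1); (z2,z1,z2); (z2,z2,z0); (z2,z2,z1); (z2,z2,z2)] : seq ('I_3 * 'I_3 * 'I_3))].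
  apply/subsetP => -[[[[|[|[|x]]] px] [[|[|[|y]]] py]] [[|[|[|z]]] pz]] //; by rewrite !inE.
case: c => [[] []] // _.
- apply: (leq_trans (subset_leq_card H1057)); rewrite cardsE; exact: card_size.
- apply: (leq_trans (subset_leq_card H667)); rewrite cardsE; exact: (leq_trans (card_size _)).
- apply: (leq_trans (subset_leq_card H264)); rewrite cardsE; exact: card_size.
Qed.

Lemma base m (F : 'I_m -> 'I_m -> bool * bool) (i j k : 'I_m) :
  i != j -> j != k -> i != k -> F i j = (false, true) -> F j k = (false, true) ->
  F i k != (false, true) -> #|Zs F [set i; j; k]| <= 19.
Proof.
move=> ij jk ik Fij Fjk Fik.
pose g (f : {ffun 'I_m -> 'I_3}) := (f i, f j, f k).
have inj : {in Zs F [set i; j; k] &, injective g}.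
  move=> f1 f2; rewrite !inE => /goodP[_ S1] /goodP[_ S2] [e1 e2 e3]; apply/ffunP => x.
  case: (boolP (x \in [set i; j; k])) => [|xn]; last by rewrite S1 ?S2.
  by rewrite !inE => /orP[/orP[]|] /eqP->.
rewrite -(card_in_imset inj).
apply: (leq_trans _ (Wc_card Fik)).
apply: subset_leq_card; apply/subsetP => _ /imsetP[f + ->].
rewrite inE => /goodP[G _].
have h1 := G i j; rewrite Fij !inE !eqxx ?orbT in h1.
have h2 := G j k; rewrite Fjk !inE !eqxx ?orbT in h2.
have h3 := G i k; rewrite !inE !eqxx ?orbT in h3.
by rewrite inE /= h1 ?h2 ?h3.
Qed.

Lemma mainind m (F : 'I_m -> 'I_m -> bool * bool) (i j k : 'I_m) :
  i != j -> j != k -> i != k -> F i j = (false, true) -> F j k = (false, true) ->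
  F i k != (false, true) ->
  forall n (R : {set 'I_m}), #|R| = n + 3 -> i \in R -> j \in R -> k \in R ->
  8 * #|Zs F R| + 2 ^ #|R| <= 4 * (#|R| + 2) * 2 ^ #|R|.
Proof.
move=> ij jk ik Fij Fjk Fik; elim=> [|n IH] R cR iR jR kR.
  have c3 : #|[set i; j; k]| = 3.
    rewrite setUC !cardsU1 cards1 !inE eq_sym (negbTE ik) eq_sym (negbTE jk) /=.
    by rewrite (negbTE ij).
  have eR : [set i; j; k] = R.
    apply/eqP; rewrite eqEcard c3 cR leqnn andbT.
    by apply/subsetP => x; rewrite !inE => /orP[/orP[]|] /eqP->.
  rewrite -eR c3; have := base ij jk ik Fij Fjk Fik; lia.
have [r rR rn] : exists2 r, r \in R & r \notin [set i; j; k].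
  apply/subsetPn; apply/negP => sub; have := subset_leq_card sub.
  rewrite cR; have : #|[set i; j; k]| <= 3.
    by rewrite setUC !cardsU1 cards1; case: (_ \notin _); case: (_ \notin _).
  move=> a b; have := leq_trans b a; lia.
have := step F rR; have := cardsD1 r R; rewrite rR cR.
move: rn; rewrite !inE !negb_or => /andP[/andP[ri rj] rk].
have := IH (R :\ r); rewrite !in_setD1 eq_sym ri eq_sym rj eq_sym rk iR jR kR /=.
move=> IH' e; have e' : #|R :\ r| = n + 3 by move: e; rewrite add1n addSn => -[->].
move: (IH' e' isT isT isT); rewrite e' => {}IH' st.
rewrite addSn expnS.
set P := 2 ^ (n + 3) in IH' st *; set Z := #|Zs F (R :\ r)| in IH' st.
nia.
Qed.

Theorem mainTheorem7 (p a d m n : nat) (A : 'M[nat]_(m, n))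
    (assoc : 'I_m -> 'I_m -> bool * bool) :
  3 <= p -> a <= p - 1 -> d <= p - 1 -> 3 <= m ->
  is012 A -> simple_mx A ->
  ~ configuration (Fmx a p p d) A ->
  valid_assoc a p d A assoc ->
  2 ^ m + m * 2 ^ (m - 1) - 2 ^ (m - 3) < #|Bcols A assoc| ->
  forall i j k : 'I_m, i != j -> j != k -> i != k ->
    Tedge assoc i j -> Tedge assoc j k -> Tedge assoc i k.
Proof.
move=> _ _ _ m3 A012 Asimp _ _ big i j k ij jk ik Tij Tjk.
pose F (u w : 'I_m) : bool * bool :=
  if u < w then assoc u w else ((assoc w u).2, (assoc w u).1).
have TF : forall u w, u != w -> Tedge assoc u w = (F u w == (false, true)).
  move=> u w uw; rewrite /Tedge /F; case: ltngtP => [h|h|/val_inj e] /=.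
  - by rewrite orbF.
  - by case: (assoc w u) => [[] []].
  - by rewrite e eqxx in uw.
case: (boolP (Tedge assoc i k)) => // nT; exfalso.
have Fij : F i j = (false, true) by apply/eqP; rewrite -TF.
have Fjk : F j k = (false, true) by apply/eqP; rewrite -TF.
have Fik : F i k != (false, true) by rewrite -TF.
pose colf (v : 'I_n) : {ffun 'I_m -> 'I_3} := [ffun u => inord (A u v)].
have colfE : forall v u, val (colf v u) = A u v.
  by move=> v u; rewrite ffunE; apply: inordK; exact: A012.
have inj : injective colf.
  move=> v1 v2 h; apply: Asimp; apply/matrixP => x y; rewrite !mxE.
  by rewrite -!colfE h.
have sub : colf @: Bcols A assoc \subset Zs F setT.
  apply/subsetP => _ /imsetP[v + ->]; rewrite !inE => /forallP NM.
  apply/goodP; split; last by move=> u; rewrite inE.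
  move=> u w _ _ uw; rewrite /pat !colfE /F.
  case: ltngtP => [h|h|/val_inj e].
  - by have := NM u => /forallP /(_ w) /implyP /(_ h).
  - have := NM w => /forallP /(_ u) /implyP /(_ h).
    by rewrite /has_mark andbC.
  - by rewrite e eqxx in uw.
have c1 := subset_leq_card sub; rewrite (card_imset _ inj) in c1.
have c2 := mainind ij jk ik Fij Fjk Fik (n := m - 3) (R := setT).
rewrite cardsT card_ord !inE in c2; have {c2} := c2 (ltac:(lia)) isT isT isT.
move: big c1.
set B := #|Bcols A assoc|; set Z := #|Zs F setT|.
have e1 : 2 ^ m = 8 * 2 ^ (m - 3) by rewrite -[8]/(2 ^ 3) -expnD; congr (_ ^ _); lia.
have e2 : 2 ^ (m - 1) = 4 * 2 ^ (m - 3) by rewrite -[4]/(2 ^ 2) -expnD; congr (_ ^ _); lia.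
rewrite e1 e2; set P := 2 ^ (m - 3).
nia.
Qed.
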